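(* Let $\mu$ be an infinite cardinal, $\langle\mathbb{Q}_i:i\in I\rangle$ a sequence of posets such that each $\mathbb{Q}_i=\bigcup_{\zeta<\mu}Q_{i,\zeta}$ with each $Q_{i,\zeta}$ an $\mathrm{Fr}$-linked subset of $\mathbb{Q}_i$, and let $\mathbb{P}$ be the finite support product of $\langle\mathbb{Q}_i:i\in I\rangle$. Assume (i) $|I|\leq 2^\mu$, and (ii) for every finite $u\subseteq I$ and every $s:u\to\mu$, $\prod_{i\in u}Q_{i,s(i)}$ is $\mathrm{Fr}$-linked in $\prod_{i\in u}\mathbb{Q}_i$. Then $\mathbb{P}$ is $\mu$-$\mathrm{Fr}$-linked.
   Context: For a poset $\mathbb{P}$ and $\bar p=\langle p_n:n<\omega\rangle$ in $\mathbb{P}$, $\dot W(\bar p)$ names $\{n:p_n\in\dot G\}$. $Q\subseteq\mathbb{P}$ is $\mathrm{Fr}$-linked if for every sequence $\bar p$ in $Q$ some $q\in\mathbb{P}$ forces $\dot W(\bar p)$ infinite. $\mathbb{P}$ is $\mu$-$\mathrm{Fr}$-linked if it is a union of $\mu$ many $\mathrm{Fr}$-linked subsets. *)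

(* Defs.v *)
From Stdlib Require Import List Arith.
Set Implicit Arguments.

(* A forcing notion: a preorder (le p q = "p is stronger than q") with a top 1. *)
Unset Implicit Arguments.
Record forcing := Forcing {
  carrier :> Type;
  fle : carrier -> carrier -> Prop;
  ftop : carrier;
  fle_refl : forall p, fle p p;
  fle_trans : forall p q r, fle p q -> fle q r -> fle p r;
  fle_top : forall p, fle p ftop
}.
Arguments fle {f} _ _.
Arguments ftop f : assert.
Set Implicit Arguments.

Definition finite_sub (T : Type) (A : T -> Prop) : Prop :=
  exists l : list T, forall x, A x -> In x l.

(* q forces that W(pbar) = {n | pbar n \in G} is infinite:
   for every m, the set of conditions below some pbar n with n >= m is dense below q. *)
Definition forces_W_infinite {P : forcing} (q : P) (pbar : nat -> P) : Prop :=
  forall m (r : P), fle r q ->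
    exists n (r' : P), m <= n /\ fle r' r /\ fle r' (pbar n).

Definition Fr_linked {P : forcing} (Q : P -> Prop) : Prop :=
  forall pbar : nat -> P, (forall n, Q (pbar n)) ->
    exists q : P, forces_W_infinite q pbar.

(* P is mu-Fr-linked, mu given as the cardinality of the type M *)
Definition mu_Fr_linked (M : Type) (P : forcing) : Prop :=
  exists F : M -> P -> Prop,
    (forall z, Fr_linked (F z)) /\ (forall p : P, exists z, F z p).

Section FSProd.
Variables (I : Type) (Q : I -> forcing).

Definition fsp_carrier :=
  { f : forall i, Q i | finite_sub (fun i => f i <> ftop (Q i)) }.

Definition fsp_le (f g : fsp_carrier) : Prop :=
  forall i, fle (proj1_sig f i) (proj1_sig g i).

Lemma fsp_top_fin : finite_sub (fun i => (fun i => ftop (Q i)) i <> ftop (Q i)).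
Proof. exists nil; intros x H; now elim H. Qed.

Definition fsp_top : fsp_carrier := exist _ (fun i => ftop (Q i)) fsp_top_fin.

Lemma fsp_le_refl : forall p, fsp_le p p.
Proof. intros p i; apply fle_refl. Qed.

Lemma fsp_le_trans : forall p q r, fsp_le p q -> fsp_le q r -> fsp_le p r.
Proof. intros p q r H1 H2 i; eapply fle_trans; eauto. Qed.

Lemma fsp_le_top : forall p, fsp_le p fsp_top.
Proof. intros p i; apply fle_top. Qed.

Definition fs_prod : forcing :=
  @Forcing fsp_carrier fsp_le fsp_top fsp_le_refl fsp_le_trans fsp_le_top.
End FSProd.

(* Main.v *)
Require Import Defs.
From Stdlib Require Import List Arith.

Module ZornW.
From mathcomp Require Import all_boot boolp classical_sets.
Lemma zorn_prop (T:Type) (t0:T) (R: T->T->Prop) :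
  (forall t, R t t) -> (forall r s t, R r s -> R s t -> R r t) ->
  (forall A : T -> Prop, (forall s t, A s -> A t -> R s t \/ R t s) -> exists t, forall s, A s -> R s t) ->
  exists t, forall s, R t s -> R s t.
Proof.
move=> Rr Rt Hc.
pose R' := (fun a b => `[< R a b >]).
have H1 : forall x, R' x x by move=> x; apply/asboolP.
have H2 : forall a b c, R' a b -> R' b c -> R' a c.
  by move=> a b c /asboolP ? /asboolP ?; apply/asboolP; eauto.
have H3 : forall A, total_on A R' -> exists t, forall s, A s -> R' s t.
  move=> A HA; case: (Hc A) => [s u As Au|t Ht].
    by case: (HA s u As Au) => /asboolP; auto.
  by exists t => s /Ht ?; apply/asboolP.
have [t Ht] := ZL_preorder t0 H1 H2 H3.
by exists t => s Rts; apply/asboolP; apply: Ht; apply/asboolP.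
Qed.
End ZornW.

From Stdlib Require Import List Arith Lia Classical ClassicalEpsilon Cantor.

Section Card.
Variable M : Type.
Variable g : nat -> M.
Hypothesis g_inj : forall a b, g a = g b -> a = b.

Definition dec (P : Prop) : {P} + {~P} := excluded_middle_informative P.

Record st := mkst { sA : M -> Prop; sh : M -> M -> M }.
Definition valid (s : st) : Prop :=
  (forall n, sA s (g n)) /\
  (forall a b, sA s a -> sA s b -> sA s (sh s a b)) /\
  (forall a b c d, sA s a -> sA s b -> sA s c -> sA s d -> sh s a b = sh s c d -> a = c /\ b = d).
Definition T := { s : st | valid s }.
Definition RT (x y : T) : Prop :=
  (forall m, sA (proj1_sig x) m -> sA (proj1_sig y) m) /\
  (forall a b, sA (proj1_sig x) a -> sA (proj1_sig x) b -> sh (proj1_sig y) a b = sh (proj1_sig x) a b).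

Definition ginv (a : M) : nat := epsilon (inhabits 0) (fun n => g n = a).
Lemma ginv_spec n : ginv (g n) = n.
Proof.
  unfold ginv. apply g_inj. apply (epsilon_spec (inhabits 0) (fun k => g k = g n)). eauto.
Qed.

Definition s0 : st := mkst (fun m => exists n, g n = m) (fun a b => g (to_nat (ginv a, ginv b))).
Lemma s0_valid : valid s0.
Proof.
  unfold valid, s0; cbn [sA sh]; split; [|split].
  - intros n; eauto.
  - intros a b _ _; eauto.
  - intros a b c d [na <-] [nb <-] [nc <-] [nd <-] E.
    apply g_inj, to_nat_inj in E. rewrite !ginv_spec in E. inversion E. auto.
Qed.
Definition t0 : T := exist _ s0 s0_valid.

Lemma RT_refl x : RT x x.
Proof. split; auto. Qed.
Lemma RT_trans x y z : RT x y -> RT y z -> RT x z.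
Proof.
  intros [A1 B1] [A2 B2]; split; auto.
  intros a b Ha Hb. rewrite B2 by auto. auto.
Qed.

Section Chain.
Variable C : T -> Prop.
Hypothesis Ctot : forall s t, C s -> C t -> RT s t \/ RT t s.
Variable x0 : T.
Hypothesis Cx0 : C x0.

Definition uA (m : M) : Prop := exists x, C x /\ sA (proj1_sig x) m.
Definition uh (a b : M) : M :=
  sh (proj1_sig (epsilon (inhabits t0) (fun x => C x /\ sA (proj1_sig x) a /\ sA (proj1_sig x) b))) a b.

Lemma common2 a b : uA a -> uA b -> exists x, C x /\ sA (proj1_sig x) a /\ sA (proj1_sig x) b.
Proof.
  intros [x [Cx Ha]] [y [Cy Hb]].
  destruct (Ctot x y Cx Cy) as [[H _]|[H _]]; eauto.
Qed.

Lemma uh_eq x a b : C x -> sA (proj1_sig x) a -> sA (proj1_sig x) b -> uh a b = sh (proj1_sig x) a b.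
Proof.
  intros Cx Ha Hb. unfold uh.
  set (P := fun x => C x /\ sA (proj1_sig x) a /\ sA (proj1_sig x) b).
  assert (HP : P (epsilon (inhabits t0) P)) by (apply epsilon_spec; exists x; unfold P; auto).
  destruct HP as [Cy [Hya Hyb]].
  destruct (Ctot (epsilon (inhabits t0) P) x Cy Cx) as [[_ E]|[_ E]].
  - apply eq_sym, E; auto.
  - apply E; auto.
Qed.

Lemma common_sub x y : C x -> C y -> exists z, C z /\ RT x z /\ RT y z.
Proof.
  intros Cx Cy. destruct (Ctot x y Cx Cy) as [H|H].
  - exists y; split; auto; split; auto using RT_refl.
  - exists x; split; auto; split; auto using RT_refl.
Qed.

Definition ust : st := mkst uA uh.
Lemma ust_valid : valid ust.
Proof.
  split; [|split]; simpl.
  - intros n. exists x0; split; auto. destruct (proj2_sig x0) as [H _]; apply H.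
  - intros a b Ha Hb. destruct (common2 a b Ha Hb) as [x [Cx [Hxa Hxb]]].
    rewrite (uh_eq x) by auto. exists x; split; auto.
    destruct (proj2_sig x) as [_ [H _]]; auto.
  - intros a b c d Ha Hb Hc Hd E.
    destruct (common2 a b Ha Hb) as [x [Cx [Hxa Hxb]]].
    destruct (common2 c d Hc Hd) as [y [Cy [Hyc Hyd]]].
    destruct (common_sub x y Cx Cy) as [z [Cz [[Sx _] [Sy _]]]].
    rewrite (uh_eq z) in E by auto. rewrite (uh_eq z) in E by auto.
    destruct (proj2_sig z) as [_ [_ H]]; apply H; auto.
Qed.
Definition uT : T := exist _ ust ust_valid.
Lemma uT_ub x : C x -> RT x uT.
Proof.
  intros Cx; split; simpl.
  - intros m Hm; exists x; auto.
  - intros a b Ha Hb; apply uh_eq; auto.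
Qed.
End Chain.

Lemma chain_ub (C : T -> Prop) : (forall s t, C s -> C t -> RT s t \/ RT t s) -> exists t, forall s, C s -> RT s t.
Proof.
  intros Ctot. destruct (classic (exists x, C x)) as [[x Cx]|N].
  - exists (uT C Ctot x Cx). intros; apply uT_ub; auto.
  - exists t0. intros s Cs; exfalso; eauto.
Qed.

Lemma maxT : exists t, forall s, RT t s -> RT s t.
Proof. apply (ZornW.zorn_prop T t0 RT RT_refl RT_trans chain_ub). Qed.


Section Ext.
Variable t : T.
Let A := sA (proj1_sig t).
Let h := sh (proj1_sig t).
Let tv : valid (proj1_sig t) := proj2_sig t.
Lemma A_g n : A (g n). Proof. destruct tv as [H _]; apply H. Qed.
Lemma A_h a b : A a -> A b -> A (h a b). Proof. destruct tv as [_ [H _]]; apply H. Qed.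
Lemma h_inj a b c d : A a -> A b -> A c -> A d -> h a b = h c d -> a = c /\ b = d.
Proof. destruct tv as [_ [_ H]]; apply H. Qed.

Section Phi.
Variable phi : M -> M.
Hypothesis phi_out : forall a, A a -> ~ A (phi a).
Hypothesis phi_inj : forall a b, A a -> A b -> phi a = phi b -> a = b.

Let B m := exists a, A a /\ phi a = m.
Let phinv m := epsilon (inhabits (g 0)) (fun a => A a /\ phi a = m).
Let enc x := if dec (A x) then x else phinv x.
Let tag x y := if dec (A x) then 0 else if dec (A y) then 1 else 2.
Let A' m := A m \/ B m.
Let h' x y := if dec (A x /\ A y) then h x y else phi (h (g (tag x y)) (h (enc x) (enc y))).

Lemma enc_A x : A x -> enc x = x.
Proof. intros Hx; unfold enc; destruct (dec (A x)); tauto. Qed.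
Lemma enc_B x : A' x -> ~ A x -> A (enc x) /\ phi (enc x) = x.
Proof.
  intros [Hx|Hx] Hn; [tauto|]. unfold enc; destruct (dec (A x)); [tauto|].
  unfold phinv. apply (epsilon_spec (inhabits (g 0)) (fun a => A a /\ phi a = x)). exact Hx.
Qed.
Lemma enc_in x : A' x -> A (enc x).
Proof. intros Hx. destruct (classic (A x)). rewrite enc_A; auto. apply enc_B; auto. Qed.

Lemma h'_in x y : A' x -> A' y -> (A (h' x y) <-> A x /\ A y).
Proof.
  intros Hx Hy. unfold h'. destruct (dec (A x /\ A y)) as [H|H].
  - split; auto. intros _. apply A_h; tauto.
  - split; [|tauto]. intros Hc. exfalso. eapply phi_out; [|exact Hc].
    apply A_h. apply A_g. apply A_h; apply enc_in; auto.
Qed.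

Definition s' : st := mkst A' h'.
Lemma s'_valid : valid s'.
Proof.
  unfold valid, s'; cbn [sA sh]; split; [|split].
  - intros n; left; apply A_g.
  - intros a b Ha Hb. unfold h'. destruct (dec (A a /\ A b)) as [H|H].
    + left; apply A_h; tauto.
    + right. eexists; split; [|reflexivity]. apply A_h. apply A_g. apply A_h; apply enc_in; auto.
  - intros a b c d Ha Hb Hc Hd E.
    pose proof (h'_in a b Ha Hb) as I1. pose proof (h'_in c d Hc Hd) as I2.
    unfold h' in E. destruct (dec (A a /\ A b)) as [H1|H1]; destruct (dec (A c /\ A d)) as [H2|H2].
    + apply h_inj; tauto.
    + exfalso. unfold h' in I1, I2. destruct (dec (A a /\ A b)); [|tauto].
      destruct (dec (A c /\ A d)); [tauto|]. rewrite E in I1. tauto.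
    + exfalso. unfold h' in I1, I2. destruct (dec (A a /\ A b)); [tauto|].
      destruct (dec (A c /\ A d)); [|tauto]. rewrite E in I1. tauto.
    + apply phi_inj in E.
      2:{ apply A_h. apply A_g. apply A_h; apply enc_in; auto. }
      2:{ apply A_h. apply A_g. apply A_h; apply enc_in; auto. }
      apply h_inj in E; try apply A_g; try (apply A_h; apply enc_in; auto).
      destruct E as [Et E]. apply g_inj in Et.
      apply h_inj in E; try (apply enc_in; auto). destruct E as [Ea Eb].
      assert (R : forall x y, A' x -> A' y -> enc x = enc y -> (A x <-> A y) -> x = y).
      { intros x y Hx' Hy' Exy Hxy. destruct (classic (A x)) as [Hx|Hx].
        - rewrite !enc_A in Exy; tauto.
        - destruct (enc_B x Hx' Hx) as [_ P1]. destruct (enc_B y Hy') as [_ P2]; [tauto|].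
          rewrite <- P1, <- P2, Exy; reflexivity. }
      unfold tag in Et.
      destruct (dec (A a)); destruct (dec (A b)); destruct (dec (A c)); destruct (dec (A d));
        try discriminate; try tauto; split; apply R; auto; tauto.
Qed.
Definition T' : T := exist _ s' s'_valid.
Lemma ext_contra : RT t T' /\ ~ RT T' t.
Proof.
  split.
  - split; simpl.
    + intros m Hm; left; exact Hm.
    + intros a b Ha Hb. unfold h'. destruct (dec (A a /\ A b)); tauto.
  - intros [S _]. simpl in S. apply (phi_out (g 0) (A_g 0)). apply S. right. exists (g 0); split; auto. apply A_g.
Qed.
End Phi.

Hypothesis tmax : forall s, RT t s -> RT s t.

Lemma no_inj : ~ exists phi : M -> M, (forall a, A a -> ~ A (phi a)) /\ (forall a b, A a -> A b -> phi a = phi b -> a = b).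
Proof.
  intros [phi [H1 H2]]. destruct (ext_contra phi H1 H2) as [X Y]. apply Y, tmax, X.
Qed.

Definition pb (G : M -> M -> Prop) : Prop :=
  (forall x y, G x y -> A x /\ ~ A y) /\ (forall x y y', G x y -> G x y' -> y = y') /\
  (forall x x' y, G x y -> G x' y -> x = x').
Definition T2 := { G : M -> M -> Prop | pb G }.
Definition R2 (x y : T2) : Prop := forall a b, proj1_sig x a b -> proj1_sig y a b.
Lemma pb0 : pb (fun _ _ => False). Proof. unfold pb; intuition. Qed.

Lemma chain_ub2 (C : T2 -> Prop) : (forall s t, C s -> C t -> R2 s t \/ R2 t s) -> exists t, forall s, C s -> R2 s t.
Proof.
  intros Ctot.
  set (U := fun a b => exists x, C x /\ proj1_sig x a b).
  assert (common : forall a b c d, U a b -> U c d -> exists x, C x /\ proj1_sig x a b /\ proj1_sig x c d).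
  { intros a b c d [x [Cx H1]] [y [Cy H2]]. destruct (Ctot x y Cx Cy) as [H|H]; eauto 6. }
  assert (pU : pb U).
  { split; [|split].
    - intros x y [z [_ Hz]]. destruct (proj2_sig z) as [P _]. apply P, Hz.
    - intros x y y' H1 H2. destruct (common _ _ _ _ H1 H2) as [z [_ [Z1 Z2]]].
      destruct (proj2_sig z) as [_ [P _]]. eapply P; eauto.
    - intros x x' y H1 H2. destruct (common _ _ _ _ H1 H2) as [z [_ [Z1 Z2]]].
      destruct (proj2_sig z) as [_ [_ P]]. eapply P; eauto. }
  exists (exist _ U pU). intros s Cs a b Hab. simpl. exists s; auto.
Qed.

Lemma emb : exists e : M -> M, (forall m, A (e m)) /\ (forall a b, e a = e b -> a = b).
Proof.
  destruct (ZornW.zorn_prop T2 (exist _ _ pb0) R2) as [[G pG] HG].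
  - intros x a b; auto.
  - intros x y z H1 H2 a b H; auto.
  - apply chain_ub2.
  - destruct (classic (forall a, A a -> exists y, G a y)) as [Hall|Hn].
    + exfalso. apply no_inj.
      exists (fun a => epsilon (inhabits (g 0)) (G a)).
      assert (S : forall a, A a -> G a (epsilon (inhabits (g 0)) (G a))).
      { intros a Ha. apply epsilon_spec. auto. }
      split.
      * intros a Ha. pose proof pG as [P _]. destruct (P _ _ (S a Ha)); auto.
      * intros a b Ha Hb E. pose proof pG as [_ [_ P]]. eapply P. apply S, Ha. rewrite E. apply S, Hb.
    + apply not_all_ex_not in Hn. destruct Hn as [a Ha].
      apply imply_to_and in Ha. destruct Ha as [Aa Ha].
      assert (Ha' : forall y, ~ G a y) by (intros y Hy; apply Ha; eauto).
      assert (Hb : forall b, ~ A b -> exists x, G x b).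
      { intros b Nb. apply NNPP. intros Nx.
        set (G' := fun x y => G x y \/ (x = a /\ y = b)).
        assert (pG' : pb G').
        { pose proof pG as [P1 [P2 P3]]. split; [|split].
          - intros x y [H|[E1 E2]]; [apply P1; exact H|]. subst x y. auto.
          - intros x y y' H1 H2. destruct H1 as [H1|[E1 E2]]; destruct H2 as [H2|[E3 E4]]; subst; eauto;
              exfalso; eapply Ha'; eauto.
          - intros x x' y H1 H2. destruct H1 as [H1|[E1 E2]]; destruct H2 as [H2|[E3 E4]]; subst; eauto;
              exfalso; eapply Nx; eauto. }
        assert (R : R2 (exist _ G pG) (exist _ G' pG')) by (intros x y H; left; exact H).
        apply HG in R. apply (Ha' b). apply R. simpl. right; auto. }
      set (psi := fun b => epsilon (inhabits (g 0)) (fun x => G x b)).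
      assert (S : forall b, ~ A b -> G (psi b) b) by (intros b Nb; apply epsilon_spec; auto).
      exists (fun m => if dec (A m) then h (g 0) m else h (g 1) (psi m)). split.
      * intros m. destruct (dec (A m)) as [Am|Am]; apply A_h; try apply A_g; auto.
        pose proof pG as [P _]. destruct (P _ _ (S m Am)); auto.
      * assert (Apsi : forall b, ~ A b -> A (psi b)).
        { intros b Nb. pose proof pG as [P _]. destruct (P _ _ (S b Nb)); auto. }
        intros x y E. destruct (dec (A x)) as [Ax|Ax]; destruct (dec (A y)) as [Ay|Ay];
          apply h_inj in E; try apply A_g; auto; destruct E as [E1 E2]; apply g_inj in E1; try discriminate; auto.
        pose proof pG as [_ [P _]]. eapply P. apply S, Ax. rewrite E2. apply S, Ay.
Qed.

Lemma pair_from_t : exists pi : M -> M -> M, forall a b c d, pi a b = pi c d -> a = c /\ b = d.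
Proof.
  destruct emb as [e [He1 He2]]. exists (fun a b => h (e a) (e b)).
  intros a b c d E. apply h_inj in E; auto. destruct E; split; auto.
Qed.
End Ext.

Theorem pair_inj : exists pi : M -> M -> M, forall a b c d, pi a b = pi c d -> a = c /\ b = d.
Proof. destruct maxT as [t Ht]. exact (pair_from_t t Ht). Qed.

End Card.

From Stdlib Require Import List Arith Lia Classical ClassicalEpsilon FunctionalExtensionality.

Section Code.
Variable M : Type.
Variable g : nat -> M.
Hypothesis g_inj : forall a b, g a = g b -> a = b.
Definition codable (X : Type) := exists c : X -> M, forall a b, c a = c b -> a = b.
Lemma codable_M : codable M. Proof. exists (fun x : M => x); auto. Qed.
Lemma codable_nat : codable nat. Proof. exists g; auto. Qed.
Lemma codable_bool : codable bool.
Proof. exists (fun b : bool => g (if b then 1 else 0)). intros [] [] E; auto; apply g_inj in E; discriminate. Qed.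
Lemma codable_prod X Y : codable X -> codable Y -> codable (X * Y).
Proof.
  intros [c1 H1] [c2 H2]. destruct (pair_inj M g g_inj) as [pi Hpi].
  exists (fun p => pi (c1 (fst p)) (c2 (snd p))). intros [a b] [a' b'] E. simpl in E.
  apply Hpi in E. destruct E as [E1 E2]. apply H1 in E1. apply H2 in E2. subst; auto.
Qed.
Lemma codable_list X : codable X -> codable (list X).
Proof.
  intros [c Hc]. destruct (pair_inj M g g_inj) as [pi Hpi].
  set (fold := fix fold (l : list X) : M := match l with nil => g 0 | x :: l' => pi (c x) (fold l') end).
  exists (fun l => pi (g (length l)) (fold l)). intros a b E.
  apply Hpi in E. destruct E as [E1 E2]. apply g_inj in E1.
  revert b E1 E2. induction a as [|x a IH]; intros [|y b] E1 E2; simpl in *; try discriminate; auto.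
  apply Hpi in E2. destruct E2 as [E3 E4]. apply Hc in E3. subst. f_equal. apply IH; auto.
Qed.
End Code.

Section HMP.
Variables (I M : Type) (f : I -> M -> bool) (d : M).
Hypothesis f_inj : forall a b, f a = f b -> a = b.

Fixpoint lookup (k : list bool) (t : list (list bool * M)) : M :=
  match t with
  | nil => d
  | (k', v) :: t' => if list_eq_dec Bool.bool_dec k' k then v else lookup k t'
  end.

Lemma diff_point a b : a <> b -> exists m, f a m <> f b m.
Proof.
  intros N. apply NNPP. intros H. apply N, f_inj. apply functional_extensionality.
  intros m. apply NNPP. intros H'. apply H. eauto.
Qed.

Lemma sep1 a u : exists Da, forall i, In i u -> map (f a) Da = map (f i) Da -> a = i.
Proof.
  induction u as [|b u IH].
  - exists nil. intros i [].
  - destruct IH as [Da HDa]. destruct (classic (a = b)) as [E|N].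
    + exists Da. intros i [<-|Hi] Hm; auto.
    + destruct (diff_point a b N) as [m Hm]. exists (m :: Da).
      intros i [<-|Hi] E; simpl in E; injection E as E1 E2.
      * contradiction.
      * apply HDa; auto.
Qed.

Lemma map_app_split (h1 h2 : M -> bool) (A B : list M) :
  map h1 (A ++ B) = map h2 (A ++ B) -> map h1 A = map h2 A /\ map h1 B = map h2 B.
Proof.
  induction A as [|x A IH]; simpl; auto. intros E. injection E as E1 E2.
  destruct (IH E2). split; auto. f_equal; auto.
Qed.

Lemma sep u : exists D, forall i i', In i u -> In i' u -> map (f i) D = map (f i') D -> i = i'.
Proof.
  induction u as [|a u IH].
  - exists nil. intros i i' [].
  - destruct IH as [D HD]. destruct (sep1 a u) as [Da HDa]. exists (Da ++ D).
    intros i i' Hi Hi' E. apply map_app_split in E. destruct E as [E1 E2].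
    destruct Hi as [<-|Hi]; destruct Hi' as [<-|Hi']; auto.
    + apply eq_sym, HDa; auto.
Qed.

Lemma hmp u (s : I -> M) : exists D tbl, forall i, In i u -> lookup (map (f i) D) tbl = s i.
Proof.
  destruct (sep u) as [D HD]. exists D. exists (map (fun i => (map (f i) D, s i)) u).
  assert (G : forall u0, incl u0 u -> forall i, In i u0 -> In i u ->
     lookup (map (f i) D) (map (fun i => (map (f i) D, s i)) u0) = s i).
  { induction u0 as [|a u0 IH]; intros Hinc i Hi Hiu; [destruct Hi|].
    simpl. destruct (list_eq_dec Bool.bool_dec (map (f a) D) (map (f i) D)) as [E|N].
    - f_equal. apply HD; auto. apply Hinc; left; auto.
    - destruct Hi as [<-|Hi]; [contradiction|]. apply IH; auto. intros x Hx; apply Hinc; right; auto. }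
  intros i Hi. apply G; auto. intros x; auto.
Qed.
End HMP.

Lemma incr_mono (s : nat -> nat) : (forall n, s n < s (S n)) -> forall a b, a < b -> s a < s b.
Proof.
  intros H a b Hab. induction Hab as [|b Hab IH]; [apply H|]. specialize (H b). lia.
Qed.
Lemma incr_ge (s : nat -> nat) : (forall n, s n < s (S n)) -> forall n, n <= s n.
Proof. intros H n. induction n; [lia|]. specialize (H n). lia. Qed.

Section Delta.
Variable X : Type.
Definition xdec : forall x y : X, {x = y} + {x <> y} := fun x y => dec (x = y).

Definition maxb (b : X -> nat) (acc : list X) : nat := fold_right (fun x m => Nat.max (b x) m) 0 acc.
Lemma maxb_ge b acc x : In x acc -> b x <= maxb b acc.
Proof. induction acc as [|y acc IH]; simpl; [tauto|]. intros [<-|H]; [lia|]. specialize (IH H); lia. Qed.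

Lemma delta k : forall l : nat -> list X, (forall n, length (l n) <= k) ->
  exists (s : nat -> nat) (r : list X), (forall n, s n < s (S n)) /\
    (forall n x, In x r -> In x (l (s n))) /\
    (forall n n' x, n <> n' -> In x (l (s n)) -> In x (l (s n')) -> In x r).
Proof.
  induction k as [|k IH]; intros l Hl.
  - exists (fun n => n), nil. split; [auto|split].
    + intros n x [].
    + intros n n' x _ Hx. specialize (Hl n). destruct (l n); simpl in *; [destruct Hx|lia].
  - destruct (classic (exists x, forall N, exists n, N <= n /\ In x (l n))) as [[x Hx]|Hn].
    + set (next := fun N => epsilon (inhabits 0) (fun n => N <= n /\ In x (l n))).
      assert (Hnext : forall N, N <= next N /\ In x (l (next N))) by (intros N; apply epsilon_spec, Hx).
      set (tau := fix tau n := match n with 0 => next 0 | S n => next (S (tau n)) end).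
      assert (Htau : forall n, tau n < tau (S n)) by (intros n; simpl; destruct (Hnext (S (tau n))); lia).
      assert (Htx : forall n, In x (l (tau n))) by (intros [|n]; simpl; apply Hnext).
      destruct (IH (fun n => remove xdec x (l (tau n)))) as [s [r [Hs [Hr Hp]]]].
      { intros n. pose proof (remove_length_lt xdec (l (tau n)) x (Htx n)). specialize (Hl (tau n)). lia. }
      exists (fun n => tau (s n)), (x :: r). split; [|split].
      * intros n. apply incr_mono; auto.
      * intros n y [<-|Hy]; auto. apply (Hr n) in Hy. apply in_remove in Hy. tauto.
      * intros n n' y N H1 H2. destruct (xdec y x) as [<-|Ny]; [left; auto|right].
        apply (Hp n n'); auto; apply in_in_remove; auto.
    + assert (Hb : forall x, exists N, forall n, N <= n -> ~ In x (l n)).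
      { intros x. apply NNPP. intros H. apply Hn. exists x. intros N. apply NNPP. intros H'.
        apply H. exists N. intros n Hn' Hin. apply H'. eauto. }
      set (b := fun x => epsilon (inhabits 0) (fun N => forall n, N <= n -> ~ In x (l n))).
      assert (Hbb : forall x n, b x <= n -> ~ In x (l n)) by (intros x; apply (epsilon_spec (inhabits 0) (fun N => forall n, N <= n -> ~ In x (l n))), Hb).
      set (gg := fix gg n : nat * list X := match n with
                   | 0 => (0, l 0)
                   | S n => let a' := Nat.max (S (fst (gg n))) (maxb b (snd (gg n))) in (a', snd (gg n) ++ l a') end).
      assert (Hstep : forall n, fst (gg (S n)) = Nat.max (S (fst (gg n))) (maxb b (snd (gg n)))) by reflexivity.
      assert (Hinc : forall n x, In x (snd (gg n)) -> In x (snd (gg (S n)))) by (intros n x H; simpl; apply in_or_app; auto).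
      assert (Hcur : forall n x, In x (l (fst (gg n))) -> In x (snd (gg n))).
      { intros [|n] x H; simpl in *; auto. apply in_or_app; auto. }
      assert (Hmon : forall j n, j <= n -> forall x, In x (snd (gg j)) -> In x (snd (gg n))).
      { intros j n H. induction H; auto. }
      exists (fun n => fst (gg n)), nil. split; [|split].
      * intros n. rewrite Hstep. lia.
      * intros n x [].
      * assert (D : forall j n x, j < n -> In x (l (fst (gg j))) -> ~ In x (l (fst (gg n)))).
        { intros j n x Hjn Hx. destruct n as [|n]; [lia|]. apply Hbb. rewrite Hstep.
          pose proof (maxb_ge b _ x (Hmon j n ltac:(lia) x (Hcur j x Hx))). lia. }
        intros n n' x N H1 H2. exfalso. destruct (Nat.lt_gt_cases n n') as [[H|H] _]; auto.
        -- apply (D n n' x H H1 H2).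
        -- apply (D n' n x H H2 H1).
Qed.
End Delta.
From Stdlib Require Import List Arith Lia Classical ClassicalEpsilon.

Section Sub.
Variables (I : Type) (Q : I -> forcing) (r : list I).
Definition U := {i : I | In i r}.
Definition QU (j : U) : forcing := Q (proj1_sig j).

Lemma allU : exists lu : list U, forall j, In j lu.
Proof.
  assert (G : forall r0, incl r0 r -> exists lu : list U, forall j, In (proj1_sig j) r0 -> In j lu).
  { induction r0 as [|a r0 IH]; intros Hinc.
    - exists nil. intros j [].
    - destruct IH as [lu Hlu]. { intros x Hx; apply Hinc; right; auto. }
      assert (ha : In a r) by (apply Hinc; left; auto).
      exists (exist _ a ha :: lu). intros [i hi] [E|H]; simpl in *.
      + left. subst. f_equal. apply proof_irrelevance.
      + right. apply (Hlu (exist _ i hi)). exact H. }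
  destruct (G r (fun x H => H)) as [lu H]. exists lu. intros [i hi]. apply H. exact hi.
Qed.
Lemma finU (A : U -> Prop) : finite_sub A.
Proof. destruct allU as [lu H]. exists lu. auto. Qed.

Definition restr (p : fs_prod Q) : fs_prod QU :=
  exist _ (fun j : U => proj1_sig p (proj1_sig j)) (finU _).

Definition extf (q : fs_prod QU) (i : I) : Q i :=
  match dec (In i r) with left h => proj1_sig q (exist _ i h) | right _ => ftop (Q i) end.
Lemma extf_fin q : finite_sub (fun i => extf q i <> ftop (Q i)).
Proof. exists r. intros i. unfold extf. destruct (dec (In i r)); tauto. Qed.
Definition ext (q : fs_prod QU) : fs_prod Q := exist _ (extf q) (extf_fin q).
Lemma ext_val q i (h : In i r) : proj1_sig (ext q) i = proj1_sig q (exist _ i h).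
Proof.
  simpl. unfold extf. destruct (dec (In i r)) as [h'|n]; [|contradiction].
  rewrite (proof_irrelevance _ h' h). reflexivity.
Qed.
End Sub.

Section Link.
Variables (I M : Type) (Q : I -> forcing) (Qs : forall i : I, M -> Q i -> Prop) (hh : I -> M).
Hypothesis Hprod : forall u : I -> Prop, finite_sub u ->
     forall s : {i : I | u i} -> M,
       Fr_linked (P := fs_prod (fun j : {i : I | u i} => Q (proj1_sig j)))
         (fun f => forall j, Qs (proj1_sig j) (s j) (proj1_sig f j)).

Definition FF k (p : fs_prod Q) : Prop :=
  exists l : list I, length l <= k /\ (forall i, proj1_sig p i <> ftop (Q i) -> In i l) /\
    (forall i, In i l -> Qs i (hh i) (proj1_sig p i)).

Lemma link k : Fr_linked (FF k).
Proof.
  intros pbar Hp.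
  set (l := fun n => epsilon (inhabits nil) (fun l : list I => length l <= k /\
     (forall i, proj1_sig (pbar n) i <> ftop (Q i) -> In i l) /\
     (forall i, In i l -> Qs i (hh i) (proj1_sig (pbar n) i)))).
  assert (Hl : forall n, length (l n) <= k /\
     (forall i, proj1_sig (pbar n) i <> ftop (Q i) -> In i (l n)) /\
     (forall i, In i (l n) -> Qs i (hh i) (proj1_sig (pbar n) i))).
  { intros n. apply (epsilon_spec (inhabits nil) (fun l : list I => length l <= k /\
     (forall i, proj1_sig (pbar n) i <> ftop (Q i) -> In i l) /\
     (forall i, In i l -> Qs i (hh i) (proj1_sig (pbar n) i)))). apply Hp. }
  destruct (delta I k l (fun n => proj1 (Hl n))) as [s [r [Hs [Hroot Hpair]]]].
  set (pU := fun n => restr I Q r (pbar (s n))).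
  assert (HU : forall n (j : U I r), Qs (proj1_sig j) (hh (proj1_sig j)) (proj1_sig (pU n) j)).
  { intros n [i hi]. simpl. apply (Hl (s n)). apply Hroot; auto. }
  assert (finr : finite_sub (fun i => In i r)) by (exists r; auto).
  destruct (Hprod (fun i => In i r) finr (fun j => hh (proj1_sig j)) pU HU) as [q Hq].
  exists (ext I Q r q).
  intros m rr Hrr.
  destruct (proj2_sig rr) as [Lrr HLrr].
  assert (Hb1 : forall i, exists b, forall n, b <= n -> In i (l (s n)) -> In i r).
  { intros i. destruct (classic (exists n0, In i (l (s n0)) /\ ~ In i r)) as [[n0 [H1 H2]]|N].
    - exists (S n0). intros n Hn Hin. apply (Hpair n n0); auto. lia.
    - exists 0. intros n _ Hin. apply NNPP. intros H. apply N. eauto. }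
  assert (Hb : forall L : list I, exists b, forall i, In i L -> forall n, b <= n -> In i (l (s n)) -> In i r).
  { induction L as [|a L IH]. - exists 0. intros i []. 
    - destruct IH as [b1 H1]. destruct (Hb1 a) as [b2 H2]. exists (Nat.max b1 b2).
      intros i [<-|Hi] n Hn; [apply H2; lia|apply H1; auto; lia]. }
  destruct (Hb Lrr) as [b Hbb].
  assert (Hle : fle (f := fs_prod (QU I Q r)) (restr I Q r rr) q).
  { intros [i hi]. pose proof (Hrr i) as H. simpl in H. change (fle (proj1_sig rr i) (proj1_sig (ext I Q r q) i)) in H.
    rewrite (ext_val I Q r q i hi) in H. exact H. }
  destruct (Hq (Nat.max m b) (restr I Q r rr) Hle) as [n [r2 [Hn [H2a H2b]]]].
  set (tf := fun i => match dec (In i r) with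
             | left h => proj1_sig r2 (exist _ i h)
             | right _ => if dec (In i (l (s n))) then proj1_sig (pbar (s n)) i else proj1_sig rr i end).
  assert (tfin : finite_sub (fun i => tf i <> ftop (Q i))).
  { destruct (proj2_sig r2) as [L2 HL2].
    exists (r ++ l (s n) ++ Lrr). intros i Hi. unfold tf in Hi.
    destruct (dec (In i r)) as [h|nh]; [apply in_or_app; auto|].
    destruct (dec (In i (l (s n)))) as [h|nl]; apply in_or_app; right; apply in_or_app; auto. }
  exists (s n), (exist _ tf tfin : fs_prod Q).
  pose proof (incr_ge s Hs n).
  split; [lia|split].
  - intros i. simpl. unfold tf. destruct (dec (In i r)) as [h|nh].
    + exact (H2a (exist _ i h)).
    + destruct (dec (In i (l (s n)))) as [hl|nl].
      * assert (E : proj1_sig rr i = ftop (Q i)).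
        { apply NNPP. intros N. apply nh. apply (Hbb i (HLrr i N) n); auto. lia. }
        rewrite E. apply fle_top.
      * apply fle_refl.
  - intros i. simpl. unfold tf. destruct (dec (In i r)) as [h|nh].
    + exact (H2b (exist _ i h)).
    + destruct (dec (In i (l (s n)))) as [hl|nl].
      * apply fle_refl.
      * assert (E : proj1_sig (pbar (s n)) i = ftop (Q i)).
        { apply NNPP. intros N. apply nl. apply (Hl (s n)). exact N. }
        rewrite E. apply fle_top.
Qed.
End Link.

Theorem theorem3p22
  (M I : Type) (Q : I -> forcing)
  (Qs : forall i : I, M -> Q i -> Prop)
  (Hmu : exists g : nat -> M, forall a b, g a = g b -> a = b)
  (Hcov : forall (i : I) (p : Q i), exists z : M, Qs i z p)
  (Hlink : forall (i : I) (z : M), Fr_linked (Qs i z))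
  (HI : exists f : I -> M -> bool, forall a b, f a = f b -> a = b)
  (Hprod : forall u : I -> Prop, finite_sub u ->
     forall s : {i : I | u i} -> M,
       Fr_linked (P := fs_prod (fun j : {i : I | u i} => Q (proj1_sig j)))
         (fun f => forall j, Qs (proj1_sig j) (s j) (proj1_sig f j))) :
  mu_Fr_linked M (fs_prod Q).
Proof.
  destruct Hmu as [g g_inj]. destruct HI as [f f_inj].
  assert (cJ : codable M (nat * (list M * list (list bool * M)))).
  { repeat first [apply (codable_prod M g g_inj) | apply (codable_list M g g_inj) | apply (codable_nat M g g_inj)
       | apply (codable_nat M g) | apply (codable_bool M g g_inj) | apply (codable_M M)]. }
  destruct cJ as [c c_inj].
  set (H := fun (jd : list M * list (list bool * M)) (i : I) => lookup M (g 0) (map (f i) (fst jd)) (snd jd)).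
  set (Fj := fun (j : nat * (list M * list (list bool * M))) => FF I M Q Qs (H (snd j)) (fst j)).
  assert (Flink : forall j, Fr_linked (Fj j)) by (intros j; apply link; exact Hprod).
  assert (Fcov : forall p, exists j, Fj j p).
  { intros p. destruct (proj2_sig p) as [l Hl].
    set (sz := fun i => epsilon (inhabits (g 0)) (fun z => Qs i z (proj1_sig p i))).
    assert (Hsz : forall i, Qs i (sz i) (proj1_sig p i)) by (intros i; apply epsilon_spec, Hcov).
    destruct (hmp I M f (g 0) f_inj l sz) as [D [tbl Htbl]].
    exists (length l, (D, tbl)). exists l. split; [auto|split]; auto.
    intros i Hi. simpl. unfold H; simpl. rewrite Htbl by auto. apply Hsz. }
  exists (fun z p => exists j, c j = z /\ Fj j p). split.
  - intros z pbar Hp. destruct (Hp 0) as [j0 [E0 _]]. apply (Flink j0).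
    intros n. destruct (Hp n) as [j [E Hj]]. assert (j = j0) by (apply c_inj; congruence). subst; auto.
  - intros p. destruct (Fcov p) as [j Hj]. exists (c j). eauto.
Qed.
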